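(* Let $\mathbf{Phys}$ and $\ast\mathbf{Mod}$ be as in the context. The assignments $(A,\varphi)\mapsto (A, GNS(\varphi))$ on objects, and, for a morphism $f:(A,\varphi)\to(B,\psi)$ of $\mathbf{Phys}$ (a $\ast$-homomorphism $f:B\to A$), $$GNS(f) : GNS(\psi)=B/B^\perp \to GNS(\varphi)=A/A^\perp,\qquad [x]\mapsto [f(x)],$$ are well defined, with $(f, GNS(f))$ a morphism $(B,GNS(\psi))\to(A,GNS(\varphi))$ of $\ast\mathbf{Mod}$, and they form a strong symmetric monoidal contravariant functor $GNS:\mathbf{Phys}^{op}\to\ast\mathbf{Mod}$ lying over the functor $(A,\varphi)\mapsto A$; in particular $GNS(\varphi\otimes\psi)\cong GNS(\varphi)\otimes GNS(\psi)$ via $[a\otimes b]\mapsto [a]\otimes[b]$.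
   Context: $\ast$-algebras: unital complex algebras with conjugate-linear involutive anti-homomorphism $\ast$; $\ast$-homomorphisms unital and $\ast$-preserving. Hermitian forms linear in the first variable, possibly indefinite. A $\ast$-module over $A$: vector space with nondegenerate Hermitian form and unital left $A$-module structure with $\langle am,n\rangle=\langle m,a^\ast n\rangle$. A representable state on $A$ is a linear $\varphi:A\to\mathbb{C}$ with $\varphi(a^\ast)=\overline{\varphi(a)}$; $A^\perp$ is the radical of $\langle a,b\rangle_\varphi=\varphi(b^\ast a)$ and $GNS(\varphi)=A/A^\perp$ with induced form and left multiplication. A $\ast$-homomorphism $f:B\to A$ is admissible for a representable state $\varphi$ on $A$ if $B^\perp\subseteq f^{-1}(A^\perp)$, with $B^\perp$ computed for $\varphi\circ f$. $\mathbf{Phys}$: objects are pairs $(A,\varphi)$, $\varphi$ a representable state on $A$; morphisms $(A,\varphi)\to(B,\psi)$ are $\ast$-homomorphisms $f:B\to A$ with $\varphi\circ f=\psi$ that are admissible for $\varphi$; composition is composition of homomorphisms; monoidal product $(A,\varphi)\otimes(B,\psi)=(A\otimes B,\varphi\otimes\psi)$, unit $(\mathbb{C},\mathrm{id})$. $\ast\mathbf{Mod}$: objects pairs $(A,M)$ with $M$ a $\ast$-module over $A$; morphisms $(A,M)\to(B,N)$ are pairs $(f,h)$ with $f:A\to B$ a $\ast$-homomorphism and $h:M\to N$ a linear isometry ($\langle hx,hy\rangle=\langle x,y\rangle$) with $h(am)=f(a)h(m)$; monoidal product $(A,M)\otimes(B,N)=(A\otimes B, M\otimes N)$ with form $\langle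 m\otimes n,m'\otimes n'\rangle=\langle m,m'\rangle\langle n,n'\rangle$. *)

(* Defs.v *)
From HB Require Import structures.
From mathcomp Require Import all_boot all_order all_algebra.
From mathcomp Require Import reals complex.
From Stdlib Require Import ClassicalEpsilon.
Set Implicit Arguments. Unset Strict Implicit. Unset Printing Implicit Defensive.
Import Order.TTheory GRing.Theory Num.Theory.
Local Open Scope ring_scope.

Section StarDefs.
Variable C : numClosedFieldType.

Definition lin (V W : lmodType C) (f : V -> W) :=
  forall (c : C) x y, f (c *: x + y) = c *: f x + f y.
Definition lfun (V : lmodType C) (f : V -> C) :=
  forall (c : C) x y, f (c *: x + y) = c * f x + f y.
Definition bilin (U V W : lmodType C) (t : U -> V -> W) :=
  (forall v, lin (fun u => t u v)) /\ (forall u, lin (t u)).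

Definition is_tensor (V W T : lmodType C) (t : V -> W -> T) :=
  bilin t /\
  forall (U : lmodType C) (g : V -> W -> U), bilin g ->
    exists! h : T -> U, lin h /\ forall v w, h (t v w) = g v w.

Definition tensor_map (V W T V' W' T' : lmodType C)
  (t : V -> W -> T) (t' : V' -> W' -> T') (u : V -> V') (w : W -> W')
  (k : T -> T') := lin k /\ forall v x, k (t v x) = t' (u v) (w x).

Record starAlg := StarAlg {
  sa_car :> lmodType C;
  sa_mul : sa_car -> sa_car -> sa_car;
  sa_one : sa_car;
  sa_star : sa_car -> sa_car;
  sa_mulA : forall a b c, sa_mul a (sa_mul b c) = sa_mul (sa_mul a b) c;
  sa_mul1l : forall a, sa_mul sa_one a = a;
  sa_mul1r : forall a, sa_mul a sa_one = a;
  sa_mullin : forall (c : C) a b x,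
      sa_mul (c *: a + b) x = c *: sa_mul a x + sa_mul b x;
  sa_mulrlin : forall (c : C) a b x,
      sa_mul x (c *: a + b) = c *: sa_mul x a + sa_mul x b;
  sa_starD : forall a b, sa_star (a + b) = sa_star a + sa_star b;
  sa_starZ : forall (c : C) a, sa_star (c *: a) = c^* *: sa_star a;
  sa_starM : forall a b, sa_star (sa_mul a b) = sa_mul (sa_star b) (sa_star a);
  sa_starK : forall a, sa_star (sa_star a) = a }.

Arguments sa_mul {s}.
Arguments sa_one {s}.
Arguments sa_star {s}.

Definition is_starhom (A B : starAlg) (f : A -> B) :=
  lin f /\ f sa_one = sa_one /\
  (forall a b, f (sa_mul a b) = sa_mul (f a) (f b)) /\
  (forall a, f (sa_star a) = sa_star (f a)).

Lemma unit_mullin (c : C) (a b x : C^o) :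
  (c *: a + b) * x = c *: (a * x : C^o) + (b * x : C^o).
Proof. by rewrite mulrDl /GRing.scale /= mulrA. Qed.
Lemma unit_mulrlin (c : C) (a b x : C^o) :
  x * (c *: a + b) = c *: (x * a : C^o) + (x * b : C^o).
Proof. by rewrite mulrDr /GRing.scale /= mulrCA. Qed.
Lemma unit_starD (a b : C^o) : (a + b : C)^* = (a : C)^* + (b : C)^*.
Proof. exact: rmorphD. Qed.
Lemma unit_starZ (c : C) (a : C^o) : ((c *: a : C^o) : C)^* = c^* *: ((a : C)^* : C^o).
Proof. by rewrite /GRing.scale /= rmorphM. Qed.
Lemma unit_starM (a b : C^o) : ((a * b : C)^*) = (b : C)^* * (a : C)^*.
Proof. by rewrite rmorphM mulrC. Qed.
Lemma unit_starK (a : C^o) : ((a : C)^*)^* = a.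
Proof. exact: conjCK. Qed.

Definition unitAlg : starAlg :=
  @StarAlg C^o (fun x y : C^o => (x * y : C)) (1 : C) (fun z : C^o => (z : C)^*)
    (@mulrA C) (@mul1r C) (@mulr1 C) unit_mullin unit_mulrlin
    unit_starD unit_starZ unit_starM unit_starK.

Definition unit_state (z : unitAlg) : C := z.

Definition is_state (A : starAlg) (phi : A -> C) :=
  lfun phi /\ forall a, phi (sa_star a) = (phi a)^*.

(* A^perp : radical of <a,b>_phi = phi (b^* a) *)
Definition perp (A : starAlg) (phi : A -> C) (a : A) : Prop :=
  forall b, phi (sa_mul (sa_star b) a) = 0.

Definition admissible (A B : starAlg) (phi : A -> C) (f : B -> A) :=
  forall b, perp (phi \o f) b -> perp phi (f b).

(* morphism (A,phi) -> (B,psi) of Phys : a *-homomorphism f : B -> A *)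
Definition phys_mor (A : starAlg) (phi : A -> C) (B : starAlg) (psi : B -> C)
  (f : B -> A) :=
  is_starhom f /\ (forall b, phi (f b) = psi b) /\ admissible phi f.

(* (A, phi) (x) (B, psi) = (T, chi): T an algebraic tensor product of
   *-algebras, chi = phi (x) psi *)
Definition is_alg_tensor (A B T : starAlg) (t : A -> B -> T) :=
  is_tensor t /\
  (forall a b a' b', sa_mul (t a b) (t a' b') = t (sa_mul a a') (sa_mul b b')) /\
  sa_one = t sa_one sa_one /\
  (forall a b, sa_star (t a b) = t (sa_star a) (sa_star b)).

Definition is_state_tensor (A B T : starAlg) (t : A -> B -> T)
  (phi : A -> C) (psi : B -> C) (chi : T -> C) :=
  lfun chi /\ forall a b, chi (t a b) = phi a * psi b.

Definition is_starMod (A : starAlg) (M : lmodType C)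
  (form : M -> M -> C) (act : A -> M -> M) :=
  (forall z, lfun (fun x => form x z)) /\
  (forall x y, form y x = (form x y)^*) /\
  (forall x, (forall y, form x y = 0) -> x = 0) /\
  bilin act /\
  (forall a b m, act (sa_mul a b) m = act a (act b m)) /\
  (forall m, act sa_one m = m) /\
  (forall a m n, form (act a m) n = form m (act (sa_star a) n)).

Definition mod_mor (A : starAlg) (M : lmodType C) (fM : M -> M -> C)
  (aM : A -> M -> M) (B : starAlg) (N : lmodType C) (fN : N -> N -> C)
  (aN : B -> N -> N) (f : A -> B) (h : M -> N) :=
  is_starhom f /\ lin h /\ (forall x y, fN (h x) (h y) = fM x y) /\
  (forall a m, h (aM a m) = aN (f a) (h m)).

(* monoidal product in *Mod: (T, MN) with MN a tensor product of M, N,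
   form <m(x)n, m'(x)n'> = <m,m'><n,n'>, action (a(x)b)(m(x)n) = am (x) bn *)
Definition is_mod_tensor (A B T : starAlg) (t : A -> B -> T)
  (M : lmodType C) (fM : M -> M -> C) (aM : A -> M -> M)
  (N : lmodType C) (fN : N -> N -> C) (aN : B -> N -> N)
  (MN : lmodType C) (m : M -> N -> MN) (fMN : MN -> MN -> C) (aMN : T -> MN -> MN) :=
  is_tensor m /\
  (forall z, lfun (fun x => fMN x z)) /\
  (forall x (c : C) y z, fMN x (c *: y + z) = c^* * fMN x y + fMN x z) /\
  bilin aMN /\
  (forall x y x' y', fMN (m x y) (m x' y') = fM x x' * fN y y') /\
  (forall a b x y, aMN (t a b) (m x y) = m (aM a x) (aN b y)).

Definition unit_form (z w : C^o) : C := z * w^*.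
Definition unit_act (z : unitAlg) (w : C^o) : C^o := (z : C) * w.

(* (Q, pi) realizes GNS(phi) = A / A^perp : pi is the quotient map *)
Definition is_gns (A : starAlg) (phi : A -> C) (Q : lmodType C) (pi : A -> Q) :=
  lin pi /\ (forall q, exists a, pi a = q) /\ (forall a, pi a = 0 <-> perp phi a).

Definition rep (A : starAlg) (Q : Type) (pi : A -> Q) (q : Q) : A :=
  epsilon (inhabits 0) (fun a => pi a = q).

Definition gns_form (A : starAlg) (phi : A -> C) (Q : lmodType C) (pi : A -> Q)
  (x y : Q) : C := phi (sa_mul (sa_star (rep pi y)) (rep pi x)).
Definition gns_act (A : starAlg) (Q : lmodType C) (pi : A -> Q) (a : A) (x : Q) : Q :=
  pi (sa_mul a (rep pi x)).

Definition gns_map (A B : starAlg) (QA QB : lmodType C) (piA : A -> QA)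
  (piB : B -> QB) (f : B -> A) (x : QB) : QA := piA (f (rep piB x)).

Definition gns_cmp (A B T : starAlg) (t : A -> B -> T) (QA QB QT V : lmodType C)
  (piA : A -> QA) (piB : B -> QB) (piT : T -> QT) (m : QA -> QB -> V)
  (h : QT -> V) := lin h /\ forall a b, h (piT (t a b)) = m (piA a) (piB b).

Definition GNS_objects :=
  forall (A : starAlg) (phi : A -> C) (Q : lmodType C) (pi : A -> Q),
    is_state phi -> is_gns phi pi ->
    is_starMod (gns_form phi pi) (gns_act pi) /\
    (forall a b, gns_form phi pi (pi a) (pi b) = phi (sa_mul (sa_star b) a)) /\
    (forall a b, gns_act pi a (pi b) = pi (sa_mul a b)).

Definition GNS_morphisms :=
  forall (A : starAlg) (phi : A -> C) (B : starAlg) (psi : B -> C) (f : B -> A)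
    (QA QB : lmodType C) (piA : A -> QA) (piB : B -> QB),
    is_state phi -> is_state psi -> is_gns phi piA -> is_gns psi piB ->
    phys_mor phi psi f ->
    (forall x, gns_map piA piB f (piB x) = piA (f x)) /\
    mod_mor (gns_form psi piB) (gns_act piB) (gns_form phi piA) (gns_act piA)
      f (gns_map piA piB f).

Definition GNS_functorial :=
  (forall (A : starAlg) (phi : A -> C) (Q : lmodType C) (pi : A -> Q),
    is_state phi -> is_gns phi pi -> forall x, gns_map pi pi id x = x) /\
  (forall (A : starAlg) (phi : A -> C) (B : starAlg) (psi : B -> C)
    (D : starAlg) (om : D -> C) (f : B -> A) (g : D -> B)
    (QA QB QD : lmodType C) (piA : A -> QA) (piB : B -> QB) (piD : D -> QD),
    is_state phi -> is_state psi -> is_state om ->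
    is_gns phi piA -> is_gns psi piB -> is_gns om piD ->
    phys_mor phi psi f -> phys_mor psi om g ->
    forall x, gns_map piA piD (f \o g) x = gns_map piA piB f (gns_map piB piD g x)).

Definition GNS_tensor_iso :=
  forall (A B T : starAlg) (t : A -> B -> T) (phi : A -> C) (psi : B -> C)
    (chi : T -> C) (QA QB QT : lmodType C) (piA : A -> QA) (piB : B -> QB)
    (piT : T -> QT) (V : lmodType C) (m : QA -> QB -> V)
    (fV : V -> V -> C) (aV : T -> V -> V),
    is_state phi -> is_state psi -> is_alg_tensor t ->
    is_state_tensor t phi psi chi ->
    is_gns phi piA -> is_gns psi piB -> is_gns chi piT ->
    is_mod_tensor t (gns_form phi piA) (gns_act piA) (gns_form psi piB)
      (gns_act piB) m fV aV ->
    exists h : QT -> V,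
      gns_cmp t piA piB piT m h /\
      mod_mor (gns_form chi piT) (gns_act piT) fV aV id h /\ bijective h.

Definition GNS_tensor_natural :=
  forall (A B T A' B' T' : starAlg) (t : A -> B -> T) (t' : A' -> B' -> T')
    (phi : A -> C) (psi : B -> C) (chi : T -> C)
    (phi' : A' -> C) (psi' : B' -> C) (chi' : T' -> C)
    (f : A' -> A) (g : B' -> B) (fg : T' -> T)
    (QA QB QT QA' QB' QT' : lmodType C) (piA : A -> QA) (piB : B -> QB)
    (piT : T -> QT) (piA' : A' -> QA') (piB' : B' -> QB') (piT' : T' -> QT')
    (V V' : lmodType C) (m : QA -> QB -> V) (m' : QA' -> QB' -> V')
    (h : QT -> V) (h' : QT' -> V') (k : V' -> V),
    is_state phi -> is_state psi -> is_state phi' -> is_state psi' ->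
    is_alg_tensor t -> is_alg_tensor t' ->
    is_state_tensor t phi psi chi -> is_state_tensor t' phi' psi' chi' ->
    phys_mor phi phi' f -> phys_mor psi psi' g ->
    tensor_map t' t f g fg -> phys_mor chi chi' fg ->
    is_gns phi piA -> is_gns psi piB -> is_gns chi piT ->
    is_gns phi' piA' -> is_gns psi' piB' -> is_gns chi' piT' ->
    is_tensor m -> is_tensor m' ->
    gns_cmp t piA piB piT m h -> gns_cmp t' piA' piB' piT' m' h' ->
    tensor_map m' m (gns_map piA piA' f) (gns_map piB piB' g) k ->
    forall x, h (gns_map piT piT' fg x) = k (h' x).

Definition GNS_unit :=
  forall (QI : lmodType C) (piI : unitAlg -> QI),
    is_gns unit_state piI ->
    exists e : QI -> C^o,
      (forall z, e (piI z) = z) /\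
      mod_mor (gns_form unit_state piI) (gns_act piI) unit_form unit_act id e /\
      bijective e.

Definition GNS_assoc :=
  forall (A B D TAB TBD T1 T2 : starAlg)
    (phi : A -> C) (psi : B -> C) (om : D -> C)
    (tAB : A -> B -> TAB) (tBD : B -> D -> TBD)
    (t1 : TAB -> D -> T1) (t2 : A -> TBD -> T2)
    (chiAB : TAB -> C) (chiBD : TBD -> C) (chi1 : T1 -> C) (chi2 : T2 -> C)
    (al : T1 -> T2)
    (QA QB QD QAB QBD Q1 Q2 : lmodType C)
    (piA : A -> QA) (piB : B -> QB) (piD : D -> QD) (piAB : TAB -> QAB)
    (piBD : TBD -> QBD) (pi1 : T1 -> Q1) (pi2 : T2 -> Q2)
    (VAB VBD V1 V2 W1 W2 : lmodType C)
    (mAB : QA -> QB -> VAB) (mBD : QB -> QD -> VBD)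
    (m1 : VAB -> QD -> V1) (m2 : QA -> VBD -> V2)
    (n1 : QAB -> QD -> W1) (n2 : QA -> QBD -> W2)
    (hAB : QAB -> VAB) (hBD : QBD -> VBD) (h1 : Q1 -> W1) (h2 : Q2 -> W2)
    (hid : W1 -> V1) (idh : W2 -> V2) (alM : V1 -> V2),
    is_state phi -> is_state psi -> is_state om ->
    is_alg_tensor tAB -> is_alg_tensor tBD -> is_alg_tensor t1 -> is_alg_tensor t2 ->
    is_state_tensor tAB phi psi chiAB -> is_state_tensor tBD psi om chiBD ->
    is_state_tensor t1 chiAB om chi1 -> is_state_tensor t2 phi chiBD chi2 ->
    lin al -> (forall a b d, al (t1 (tAB a b) d) = t2 a (tBD b d)) ->
    phys_mor chi2 chi1 al ->
    is_gns phi piA -> is_gns psi piB -> is_gns om piD -> is_gns chiAB piAB ->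
    is_gns chiBD piBD -> is_gns chi1 pi1 -> is_gns chi2 pi2 ->
    is_tensor mAB -> is_tensor mBD -> is_tensor m1 -> is_tensor m2 ->
    is_tensor n1 -> is_tensor n2 ->
    gns_cmp tAB piA piB piAB mAB hAB -> gns_cmp tBD piB piD piBD mBD hBD ->
    gns_cmp t1 piAB piD pi1 n1 h1 -> gns_cmp t2 piA piBD pi2 n2 h2 ->
    tensor_map n1 m1 hAB id hid -> tensor_map n2 m2 id hBD idh ->
    lin alM -> (forall x y z, alM (m1 (mAB x y) z) = m2 x (mBD y z)) ->
    forall x, idh (h2 (gns_map pi2 pi1 al x)) = alM (hid (h1 x)).

Definition GNS_unitors :=
  (forall (A T : starAlg) (phi : A -> C) (t : unitAlg -> A -> T) (chi : T -> C)
    (lam : T -> A) (QI QA QT V W : lmodType C) (piI : unitAlg -> QI)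
    (piA : A -> QA) (piT : T -> QT) (m : QI -> QA -> V) (n : C^o -> QA -> W)
    (h : QT -> V) (e : QI -> C^o) (eid : V -> W) (lamM : W -> QA),
    is_state phi -> is_alg_tensor t -> is_state_tensor t unit_state phi chi ->
    lin lam -> (forall z a, lam (t z a) = (z : C) *: a) -> phys_mor phi chi lam ->
    is_gns unit_state piI -> is_gns phi piA -> is_gns chi piT ->
    is_tensor m -> is_tensor n -> gns_cmp t piI piA piT m h ->
    lin e -> (forall z, e (piI z) = z) -> tensor_map m n e id eid ->
    lin lamM -> (forall (z : C) x, lamM (n z x) = z *: x) ->
    forall x, lamM (eid (h x)) = gns_map piA piT lam x) /\
  (forall (A T : starAlg) (phi : A -> C) (t : A -> unitAlg -> T) (chi : T -> C)
    (rho : T -> A) (QI QA QT V W : lmodType C) (piI : unitAlg -> QI)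
    (piA : A -> QA) (piT : T -> QT) (m : QA -> QI -> V) (n : QA -> C^o -> W)
    (h : QT -> V) (e : QI -> C^o) (ide : V -> W) (rhoM : W -> QA),
    is_state phi -> is_alg_tensor t -> is_state_tensor t phi unit_state chi ->
    lin rho -> (forall a z, rho (t a z) = (z : C) *: a) -> phys_mor phi chi rho ->
    is_gns unit_state piI -> is_gns phi piA -> is_gns chi piT ->
    is_tensor m -> is_tensor n -> gns_cmp t piA piI piT m h ->
    lin e -> (forall z, e (piI z) = z) -> tensor_map m n id e ide ->
    lin rhoM -> (forall x (z : C), rhoM (n x z) = z *: x) ->
    forall x, rhoM (ide (h x)) = gns_map piA piT rho x).

Definition GNS_symmetry :=
  forall (A B T T' : starAlg) (phi : A -> C) (psi : B -> C)
    (t : A -> B -> T) (t' : B -> A -> T') (chi : T -> C) (chi' : T' -> C)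
    (s : T' -> T) (QA QB QT QT' V V' : lmodType C)
    (piA : A -> QA) (piB : B -> QB) (piT : T -> QT) (piT' : T' -> QT')
    (m : QA -> QB -> V) (m' : QB -> QA -> V') (h : QT -> V) (h' : QT' -> V')
    (sM : V' -> V),
    is_state phi -> is_state psi -> is_alg_tensor t -> is_alg_tensor t' ->
    is_state_tensor t phi psi chi -> is_state_tensor t' psi phi chi' ->
    lin s -> (forall b a, s (t' b a) = t a b) -> phys_mor chi chi' s ->
    is_gns phi piA -> is_gns psi piB -> is_gns chi piT -> is_gns chi' piT' ->
    is_tensor m -> is_tensor m' ->
    gns_cmp t piA piB piT m h -> gns_cmp t' piB piA piT' m' h' ->
    lin sM -> (forall y x, sM (m' y x) = m x y) ->
    forall x, h (gns_map piT piT' s x) = sM (h' x).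

End StarDefs.

(* Main.v *)
Require Import Defs.
From HB Require Import structures.
From mathcomp Require Import all_boot all_order all_algebra.
From mathcomp Require Import reals complex boolp.
From Stdlib Require Import ClassicalEpsilon.
Set Implicit Arguments. Unset Strict Implicit. Unset Printing Implicit Defensive.
Import Order.TTheory GRing.Theory Num.Theory.
Local Open Scope ring_scope.

Section Basics.
Variable C : numClosedFieldType.

Section LinLemmas.
Variables (V W : lmodType C) (f : V -> W).
Hypothesis hf : lin f.
Lemma linD x y : f (x + y) = f x + f y.
Proof. by have := hf 1 x y; rewrite !scale1r. Qed.
Lemma lin0 : f 0 = 0.
Proof. by have := linD 0 0; rewrite addr0 => /eqP; rewrite -subr_eq subrr eq_sym => /eqP. Qed.
Lemma linZ c x : f (c *: x) = c *: f x.
Proof. by have := hf c x 0; rewrite !addr0 lin0 addr0. Qed.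
Lemma linN x : f (- x) = - f x.
Proof. by rewrite -scaleN1r linZ scaleN1r. Qed.
Lemma linB x y : f (x - y) = f x - f y.
Proof. by rewrite linD linN. Qed.
Lemma lin_sum (I : Type) (s : seq I) (F : I -> V) :
  f (\sum_(i <- s) F i) = \sum_(i <- s) f (F i).
Proof.
elim: s => [|i s IH]; first by rewrite !big_nil lin0.
by rewrite !big_cons linD IH.
Qed.
End LinLemmas.

Lemma lfun_lin (V : lmodType C) (f : V -> C) : lfun f -> @lin C V C^o f.
Proof. by []. Qed.

Lemma lin_comp (U V W : lmodType C) (f : V -> W) (g : U -> V) :
  lin f -> lin g -> lin (f \o g).
Proof. by move=> hf hg c x y /=; rewrite hg hf. Qed.

Lemma lin_id (V : lmodType C) : lin (@id V).
Proof. by []. Qed.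

Section StarLemmas.
Variable A : starAlg C.
Lemma mul_linl (x : A) : lin (fun a : A => sa_mul a x).
Proof. by move=> c a b; rewrite sa_mullin. Qed.
Lemma mul_linr (x : A) : lin (fun a : A => sa_mul x a).
Proof. by move=> c a b; rewrite sa_mulrlin. Qed.
Lemma mul0a (x : A) : sa_mul 0 x = 0. Proof. exact: (lin0 (mul_linl x)). Qed.
Lemma mula0 (x : A) : sa_mul x 0 = 0. Proof. exact: (lin0 (mul_linr x)). Qed.
Lemma mulBa (x y z : A) : sa_mul (x - y) z = sa_mul x z - sa_mul y z.
Proof. exact: (linB (mul_linl z)). Qed.
Lemma mulaB (x y z : A) : sa_mul z (x - y) = sa_mul z x - sa_mul z y.
Proof. exact: (linB (mul_linr z)). Qed.
Lemma star0 : sa_star (0 : A) = 0.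
Proof. have := sa_starZ 0 (0 : A). by rewrite conjC0 !scale0r. Qed.
Lemma starN (x : A) : sa_star (- x) = - sa_star x.
Proof. apply/eqP. rewrite -addr_eq0. rewrite -sa_starD. rewrite addNr. rewrite star0. by []. Qed.
Lemma starB (x y : A) : sa_star (x - y) = sa_star x - sa_star y.
Proof. by rewrite sa_starD starN. Qed.
Lemma starLin (c : C) (x y : A) : sa_star (c *: x + y) = c^* *: sa_star x + sa_star y.
Proof. by rewrite sa_starD sa_starZ. Qed.
End StarLemmas.

End Basics.
Section GNSBasics.
Variable C : numClosedFieldType.
Variables (A : starAlg C) (phi : A -> C) (Q : lmodType C) (pi : A -> Q).
Hypothesis hg : is_gns phi pi.

Lemma pi_lin : lin pi. Proof. by case: hg. Qed.
Lemma pi_surj q : exists a, pi a = q. Proof. by case: hg => _ [h _]. Qed.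
Lemma pi0P a : pi a = 0 <-> perp phi a. Proof. by case: hg => _ [_ h]. Qed.

Lemma pi_eqP a b : pi a = pi b <-> perp phi (a - b).
Proof.
rewrite -pi0P (linB pi_lin); split; first by move->; rewrite subrr.
by move/eqP; rewrite subr_eq0 => /eqP.
Qed.

Lemma rep_spec q : pi (rep pi q) = q.
Proof. exact: (epsilon_spec _ (fun a => pi a = q) (pi_surj q)). Qed.

Lemma rep_perp a : perp phi (rep pi (pi a) - a).
Proof. by apply/pi_eqP; rewrite rep_spec. Qed.

Lemma perp_mull a x : perp phi a -> perp phi (sa_mul x a).
Proof.
move=> pa b; rewrite sa_mulA.
have -> : sa_mul (sa_star b) x = sa_star (sa_mul (sa_star x) b).
  by rewrite sa_starM sa_starK.
exact: pa.
Qed.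

Hypothesis hs : is_state phi.

Lemma phi_lin : @lin C A C^o phi. Proof. by case: hs. Qed.
Lemma phi_star a : phi (sa_star a) = (phi a)^*. Proof. by case: hs. Qed.

Lemma perp_side a b : perp phi a -> phi (sa_mul (sa_star a) b) = 0.
Proof.
move=> pa; have -> : sa_mul (sa_star a) b = sa_star (sa_mul (sa_star b) a).
  by rewrite sa_starM sa_starK.
by rewrite phi_star pa conjC0.
Qed.

Lemma form_pi a b : gns_form phi pi (pi a) (pi b) = phi (sa_mul (sa_star b) a).
Proof.
rewrite /gns_form.
set a' := rep pi (pi a); set b' := rep pi (pi b).
have ea : sa_mul (sa_star b') a' = sa_mul (sa_star b') (a' - a) + sa_mul (sa_star b') a.
  by rewrite mulaB subrK.
have eb : sa_mul (sa_star b') a = sa_mul (sa_star (b' - b)) a + sa_mul (sa_star b) a.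
  by rewrite starB mulBa subrK.
rewrite ea eb !(linD phi_lin) (rep_perp a) perp_side ?rep_perp //.
  by rewrite !add0r.
exact: rep_perp.
Qed.

Lemma act_pi a b : gns_act pi a (pi b) = pi (sa_mul a b).
Proof.
rewrite /gns_act; apply/pi_eqP; rewrite -mulaB; apply: perp_mull; exact: rep_perp.
Qed.

End GNSBasics.
Lemma objects_proof (C : numClosedFieldType) : GNS_objects C.
Proof.
move=> A phi Q pi hs hg.
have pl := pi_lin hg.
have fp := form_pi hg hs; have ap := act_pi hg.
split; last by split.
split.
  move=> z c x y; have [a <-] := pi_surj hg x; have [b <-] := pi_surj hg y.
  have [d <-] := pi_surj hg z.
  by rewrite /= -pl !fp mul_linr (phi_lin hs).
split.
  move=> x y; have [a <-] := pi_surj hg x; have [b <-] := pi_surj hg y.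
  by rewrite !fp -phi_star // sa_starM sa_starK.
split.
  move=> x h; have [a ea] := pi_surj hg x; rewrite -ea; apply/(pi0P hg) => b.
  by rewrite -fp ea h.
split.
  split.
    move=> v c u u'; have [b <-] := pi_surj hg v.
    by rewrite /= !ap mul_linl pl.
  move=> u c v v'; have [b <-] := pi_surj hg v; have [b' <-] := pi_surj hg v'.
  by rewrite -pl !ap mul_linr pl.
split.
  move=> a b m; have [d <-] := pi_surj hg m.
  by rewrite !ap sa_mulA.
split.
  move=> m; have [d <-] := pi_surj hg m.
  by rewrite ap sa_mul1l.
move=> a m n; have [b <-] := pi_surj hg m; have [d <-] := pi_surj hg n.
by rewrite !ap !fp sa_starM sa_starK sa_mulA.
Qed.
Section Morph.
Variable C : numClosedFieldType.

Lemma map_pi (A : starAlg C) (phi : A -> C) (B : starAlg C) (psi : B -> C)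
  (f : B -> A) (QA QB : lmodType C) (piA : A -> QA) (piB : B -> QB) :
  is_gns phi piA -> is_gns psi piB -> phys_mor phi psi f ->
  forall x, gns_map piA piB f (piB x) = piA (f x).
Proof.
move=> hA hB [[fl _] [fphi fadm]] x; rewrite /gns_map; apply/(pi_eqP hA).
rewrite -(linB fl); apply: fadm => b /=; rewrite fphi.
exact: (rep_perp hB).
Qed.

Lemma morphisms_proof : GNS_morphisms C.
Proof.
move=> A phi B psi f QA QB piA piB hsA hsB hA hB hf.
have mp := map_pi hA hB hf.
split => //.
have [[fl [f1 [fM fS]]] [fphi _]] := hf.
have plA := pi_lin hA; have plB := pi_lin hB.
split; first by case: hf.
split.
  move=> c x y; have [a <-] := pi_surj hB x; have [b <-] := pi_surj hB y.
  by rewrite -plB !mp fl plA.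
split.
  move=> x y; have [a <-] := pi_surj hB x; have [b <-] := pi_surj hB y.
  by rewrite !mp !(form_pi _ hsA) // !(form_pi _ hsB) // -fS -fM fphi.
move=> a m; have [b <-] := pi_surj hB m.
by rewrite (act_pi hB) !mp (act_pi hA) fM.
Qed.

Lemma functorial_proof : GNS_functorial C.
Proof.
split.
  move=> A phi Q pi _ hg x; exact: (rep_spec hg).
move=> A phi B psi D om f g QA QB QD piA piB piD _ _ _ hA hB hD hf hg x.
have [d <-] := pi_surj hD x.
rewrite (map_pi hB hD hg) (map_pi hA hB hf).
have hfg : phys_mor phi om (f \o g).
  have [[fl [f1 [fM fS]]] [fphi fadm]] := hf.
  have [[gl [g1 [gM gS]]] [gphi gadm]] := hg.
  split.
    split; first exact: lin_comp.
    split; first by rewrite /= g1 f1.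
    by split=> [a b|a] /=; rewrite ?gM ?fM ?gS ?fS.
  split; first by move=> b /=; rewrite fphi gphi.
  move=> b pb; apply: fadm => b' /=; rewrite fphi; move: b'.
  apply: gadm => b' /=; rewrite -fphi; exact: pb.
by rewrite (map_pi hA hD hfg).
Qed.
End Morph.
Section TensorExt.
Variable C : numClosedFieldType.

Lemma bilin_comp (V W T U : lmodType C) (t : V -> W -> T) (h : T -> U) :
  bilin t -> lin h -> bilin (fun a b => h (t a b)).
Proof.
move=> [tl tr] hl; split.
  by move=> v c u u' /=; rewrite tl hl.
by move=> u c v v' /=; rewrite tr hl.
Qed.

Lemma tensor_ext (V W T U : lmodType C) (t : V -> W -> T) (h1 h2 : T -> U) :
  is_tensor t -> lin h1 -> lin h2 -> (forall a b, h1 (t a b) = h2 (t a b)) ->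
  forall x, h1 x = h2 x.
Proof.
move=> [tb uni] l1 l2 e x.
have [h0 [_ hu]] := uni U _ (bilin_comp tb l1).
have e1 := hu h1 (conj l1 (fun _ _ => erefl)).
have e2 := hu h2 (conj l2 (fun v w => esym (e v w))).
by rewrite -e1 -e2.
Qed.

Lemma tensor_linl (V W T : lmodType C) (t : V -> W -> T) (w : W) :
  is_tensor t -> lin (fun v => t v w).
Proof. by move=> [[tl _] _]. Qed.
Lemma tensor_linr (V W T : lmodType C) (t : V -> W -> T) (v : V) :
  is_tensor t -> lin (t v).
Proof. by move=> [[_ tr] _]. Qed.

End TensorExt.
Section EasyTensor.
Variable C : numClosedFieldType.

Lemma natural_proof : GNS_tensor_natural C.
Proof.
move=> A B T A' B' T' t t' phi psi chi phi' psi' chi' f g fg QA QB QT QA' QB' QT'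
  piA piB piT piA' piB' piT' V V' m m' h h' k _ _ _ _ ht ht' _ _ hf hg [fgl fgt] hfg
  hA hB hT hA' hB' hT' _ _ [hl hc] [hl' hc'] [kl kc] x.
have [u <-] := pi_surj hT' x.
rewrite (map_pi hT hT' hfg).
apply: (@tensor_ext C A' B' T' V t' (fun u => h (piT (fg u))) (fun u => k (h' (piT' u)))).
- by case: ht'.
- exact: (lin_comp hl (lin_comp (pi_lin hT) fgl)).
- exact: (lin_comp kl (lin_comp hl' (pi_lin hT'))).
move=> a b; rewrite fgt hc hc' kc.
by rewrite (map_pi hA hA' hf) (map_pi hB hB' hg).
Qed.

Lemma symmetry_proof : GNS_symmetry C.
Proof.
move=> A B T T' phi psi t t' chi chi' s QA QB QT QT' V V' piA piB piT piT' m m' h h' sM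
  _ _ ht ht' _ _ sl st hs hA hB hT hT' _ _ [hl hc] [hl' hc'] sMl sMc x.
have [u <-] := pi_surj hT' x.
rewrite (map_pi hT hT' hs).
apply: (@tensor_ext C B A T' V t' (fun u => h (piT (s u))) (fun u => sM (h' (piT' u)))).
- by case: ht'.
- exact: (lin_comp hl (lin_comp (pi_lin hT) sl)).
- exact: (lin_comp sMl (lin_comp hl' (pi_lin hT'))).
by move=> b a; rewrite st hc hc' sMc.
Qed.

End EasyTensor.
Section EasyTensor2.
Variable C : numClosedFieldType.

Lemma unitors_proof : GNS_unitors C.
Proof.
split.
  move=> A T phi t chi lam QI QA QT V W piI piA piT m n h e eid lamM
    _ ht _ laml lamt hlam hI hA hT _ _ [hl hc] el ee [eidl eidc] lamMl lamMc x.
  have [u <-] := pi_surj hT x.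
  rewrite (map_pi hA hT hlam).
  apply: (@tensor_ext C _ A T QA t (fun u => lamM (eid (h (piT u)))) (fun u => piA (lam u))).
  - by case: ht.
  - exact: (lin_comp lamMl (lin_comp eidl (lin_comp hl (pi_lin hT)))).
  - exact: (lin_comp (pi_lin hA) laml).
  by move=> z a; rewrite /= hc eidc ee lamMc lamt (linZ (pi_lin hA)).
move=> A T phi t chi rho QI QA QT V W piI piA piT m n h e ide rhoM
  _ ht _ rhol rhot hrho hI hA hT _ _ [hl hc] el ee [idel idec] rhoMl rhoMc x.
have [u <-] := pi_surj hT x.
rewrite (map_pi hA hT hrho).
apply: (@tensor_ext C A _ T QA t (fun u => rhoM (ide (h (piT u)))) (fun u => piA (rho u))).
- by case: ht.
- exact: (lin_comp rhoMl (lin_comp idel (lin_comp hl (pi_lin hT)))).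
- exact: (lin_comp (pi_lin hA) rhol).
by move=> a z; rewrite /= hc idec ee rhoMc rhot (linZ (pi_lin hA)).
Qed.

Lemma assoc_proof : GNS_assoc C.
Proof.
move=> A B D TAB TBD T1 T2 phi psi om tAB tBD t1 t2 chiAB chiBD chi1 chi2 al
  QA QB QD QAB QBD Q1 Q2 piA piB piD piAB piBD pi1 pi2 VAB VBD V1 V2 W1 W2
  mAB mBD m1 m2 n1 n2 hAB hBD h1 h2 hid idh alM
  _ _ _ htAB htBD ht1 ht2 _ _ _ _ all alt hal hA hB hD hAB' hBD' h1' h2'
  _ _ _ _ _ _ [hABl hABc] [hBDl hBDc] [h1l h1c] [h2l h2c] [hidl hidc] [idhl idhc]
  alMl alMc x.
have [u <-] := pi_surj h1' x.
rewrite (map_pi h2' h1' hal).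
have tt1 : is_tensor t1 by case: ht1.
have ttAB : is_tensor tAB by case: htAB.
apply: (@tensor_ext C TAB D T1 V2 t1 (fun u => idh (h2 (pi2 (al u))))
   (fun u => alM (hid (h1 (pi1 u))))) => //.
- exact: (lin_comp idhl (lin_comp h2l (lin_comp (pi_lin h2') all))).
- exact: (lin_comp alMl (lin_comp hidl (lin_comp h1l (pi_lin h1')))).
move=> w d.
apply: (@tensor_ext C A B TAB V2 tAB (fun w => idh (h2 (pi2 (al (t1 w d)))))
   (fun w => alM (hid (h1 (pi1 (t1 w d)))))) => //.
- exact: (lin_comp idhl (lin_comp h2l (lin_comp (pi_lin h2') (lin_comp all (tensor_linl d tt1))))).
- exact: (lin_comp alMl (lin_comp hidl (lin_comp h1l (lin_comp (pi_lin h1') (tensor_linl d tt1))))).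
move=> a b /=.
by rewrite alt h2c idhc hBDc h1c hidc hABc alMc.
Qed.

Lemma unit_proof : GNS_unit C.
Proof.
move=> QI piI hI.
have inj z : piI z = 0 -> z = 0.
  move/(pi0P hI) => /(_ 1) /=.
  by rewrite /unit_state /= conjC1 mul1r.
have ee (z : unitAlg C) : rep piI (piI z) = z.
  apply/eqP; rewrite -subr_eq0; apply/eqP; apply: inj.
  by apply/(pi0P hI); exact: (rep_perp hI).
exists (rep piI : QI -> C^o).
split; first exact: ee.
split; last by exists piI => [x|z]; [exact: (rep_spec hI)|exact: ee].
split; first by split=> //; split.
have pl := pi_lin hI.
split.
  move=> c x y; have [a <-] := pi_surj hI x; have [b <-] := pi_surj hI y.
  by rewrite -pl !ee.
split.
  move=> x y /=; rewrite /unit_form /gns_form /unit_state /=.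
  by rewrite mulrC.
move=> z x /=; have [a <-] := pi_surj hI x.
by rewrite (act_pi hI) !ee.
Qed.

End EasyTensor2.
Definition spanP (C : numClosedFieldType) (QA QB V : lmodType C) (m : QA -> QB -> V) : pred V :=
  fun v => `[< exists s : seq (QA * QB), v = \sum_(p <- s) m p.1 p.2 >].

Lemma spanP_closed (C : numClosedFieldType) (QA QB V : lmodType C) (m : QA -> QB -> V) :
  (forall x, lin (m x)) -> GRing.subsemimod_closed (spanP m).
Proof.
move=> mr; apply: GRing.submod_closed_semi; split.
  by apply/asboolP; exists [::]; rewrite big_nil.
move=> c u v /asboolP [s ->] /asboolP [s' ->]; apply/asboolP.
exists ([seq (q.1, c *: q.2) | q <- s] ++ s').
rewrite big_cat big_map /= scaler_sumr; congr (_ + _).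
by apply: eq_bigr => q _; rewrite (linZ (mr _)).
Qed.

Definition spanT (C : numClosedFieldType) (QA QB V : lmodType C) (m : QA -> QB -> V)
  (mr : forall x, lin (m x)) := {v : V | spanP m v}.

Section SpanInst.
Variables (C : numClosedFieldType) (QA QB V : lmodType C) (m : QA -> QB -> V)
  (mr : forall x, lin (m x)).
HB.instance Definition _ := GRing.isSubmodClosed.Build C V (spanP m) (spanP_closed mr).
HB.instance Definition _ := [isSub for (@sval V (spanP m)) : spanT mr -> V].
HB.instance Definition _ := [Choice of spanT mr by <:].
HB.instance Definition _ := [SubChoice_isSubLmodule of spanT mr by <:].

Lemma span_all : is_tensor m -> forall v, spanP m v.
Proof.
move=> ht v.
have pm x y : spanP m (m x y).
  by apply/asboolP; exists [:: (x, y)]; rewrite big_seq1.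
pose g x y : spanT mr := exist _ (m x y) (pm x y).
have gb : bilin g.
  case: ht => [[ml mr'] _]; split.
    by move=> y c x x'; apply: val_inj; rewrite /= ml.
  by move=> x c y y'; apply: val_inj; rewrite /= mr'.
have [h [[hl hm] _]] := ht.2 _ g gb.
have e := @tensor_ext C QA QB V V m (fun v => val (h v)) id ht.
suff <- : val (h v) = v by exact: valP.
apply: e => //.
- by move=> c x y /=; rewrite hl.
- by move=> a b /=; rewrite hm.
Qed.
End SpanInst.
Section NonDeg.
Variables (C : numClosedFieldType) (QA QB V : lmodType C) (fA : QA -> QA -> C)
  (m : QA -> QB -> V).
Hypotheses (fAl : forall z, lfun (fun x => fA x z))
  (fAn : forall x, (forall y, fA x y = 0) -> x = 0)
  (ml : forall y, lin (fun x => m x y)) (mr : forall x, lin (m x)).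

Lemma fA_B x x' z (k : C) : fA (x - k *: x') z = fA x z - k * fA x' z.
Proof.
have l := lfun_lin (fAl z).
by rewrite (linB l) (linZ l).
Qed.

Lemma reduce_sum (s : seq (QA * QB)) :
  (forall x, \sum_(p <- s) fA p.1 x *: p.2 = 0) -> \sum_(p <- s) m p.1 p.2 = 0.
Proof.
have [n] := ubnP (size s); elim: n s => // n IH [|p s] /=; first by rewrite big_nil.
rewrite ltnS => hs hyp; rewrite big_cons.
case: (pselect (forall x, fA p.1 x = 0)) => [h0|/existsNP [x0 hx0]].
  rewrite (fAn h0) (lin0 (ml _)) add0r; apply: IH => // x.
  by have := hyp x; rewrite big_cons h0 scale0r add0r.
set c := fA p.1 x0.
have cn : c != 0 by apply/eqP.
pose k (q : QA * QB) := fA q.1 x0 / c.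
pose X := \sum_(q <- s) k q *: q.2.
have e2 : X = - p.2.
  have h := hyp x0; rewrite big_cons in h.
  have hS : \sum_(q <- s) fA q.1 x0 *: q.2 = - (c *: p.2).
    by apply/eqP; rewrite -addr_eq0 addrC h.
  have -> : X = c^-1 *: \sum_(q <- s) fA q.1 x0 *: q.2.
    rewrite scaler_sumr; apply: eq_bigr => q _.
    by rewrite scalerA mulrC.
  by rewrite hS scalerN scalerA mulVf // scale1r.
pose s' := [seq (q.1 - k q *: p.1, q.2) | q <- s].
have e1 : \sum_(q <- s') m q.1 q.2 = \sum_(q <- s) m q.1 q.2 - m p.1 X.
  rewrite big_map /= (lin_sum (mr _)) -sumrB; apply: eq_bigr => q _.
  by rewrite (linB (ml _)) (linZ (ml _)) (linZ (mr _)).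
have -> : m p.1 p.2 = - m p.1 X by rewrite e2 (linN (mr _)) opprK.
rewrite addrC -e1; apply: IH; first by rewrite size_map.
move=> x; rewrite big_map /=.
have -> : \sum_(q <- s) fA (q.1 - k q *: p.1) x *: q.2 =
          \sum_(q <- s) fA q.1 x *: q.2 - fA p.1 x *: X.
  rewrite scaler_sumr -sumrB; apply: eq_bigr => q _.
  by rewrite fA_B scalerBl scalerA mulrC.
by rewrite e2 scalerN opprK addrC; have := hyp x; rewrite big_cons.
Qed.
End NonDeg.
Section TensorIso.
Variable C : numClosedFieldType.

Lemma tensor_iso_proof : GNS_tensor_iso C.
Proof.
move=> A B T t phi psi chi QA QB QT piA piB piT V m fV aV hsA hsB halg hst hA hB hT hmt.
have [ht [tmul [tone tstar]]] := halg.
have [hm [fVl [fVr [aVb [fVm aVm]]]]] := hmt.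
have [chil chit] := hst.
have plA := pi_lin hA; have plB := pi_lin hB; have plT := pi_lin hT.
have [[tl tr] tuni] := ht.
have [[ml mr] muni] := hm.
pose g a b := m (piA a) (piB b).
have gb : bilin g.
  split => [b c a a'|a c b b']; rewrite /g.
    by rewrite plA ml.
  by rewrite plB mr.
have [H [[Hl Ht] _]] := tuni V g gb.
have cl1 x0 : lin (fun v => (fV x0 (H v))^* : C^o).
  move=> c v v' /=; by rewrite Hl fVr rmorphD rmorphM /= conjCK.
have cl2 u0 : lin (fun v => (chi (sa_mul (sa_star v) u0))^* : C^o).
  move=> c v v' /=; by rewrite starLin mul_linl chil rmorphD rmorphM /= conjCK.
have fpA := form_pi hA hsA; have fpB := form_pi hB hsB.
have S2a a b v : fV (H (t a b)) (H v) = chi (sa_mul (sa_star v) (t a b)).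
  have := @tensor_ext C A B T C^o t _ _ ht (cl1 (H (t a b))) (cl2 (t a b)).
  move=> /(_ _ v) /(congr1 (@Num.conj_op C)); rewrite !conjCK; apply.
  move=> a' b'; congr (_^*).
  by rewrite !Ht /g fVm fpA fpB tstar tmul chit.
have S2 u v : fV (H u) (H v) = chi (sa_mul (sa_star v) u).
  apply: (@tensor_ext C A B T C^o t (fun u => fV (H u) (H v))
     (fun u => chi (sa_mul (sa_star v) u)) ht) => //.
  - exact: (lin_comp (lfun_lin (fVl _)) Hl).
  - exact: (lin_comp (lfun_lin chil) (mul_linr _)).
have ZA a b : perp phi a -> perp chi (t a b).
  move=> pa v; rewrite -S2 Ht /g ((pi0P hA a).2 pa) (lin0 (ml _)).
  exact: (lin0 (lfun_lin (fVl _))).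
have ZB a b : perp psi b -> perp chi (t a b).
  move=> pb v; rewrite -S2 Ht /g ((pi0P hB b).2 pb) (lin0 (mr _)).
  exact: (lin0 (lfun_lin (fVl _))).
have perpD x y : perp chi x -> perp chi y -> perp chi (x + y).
  by move=> /(pi0P hT) px /(pi0P hT) py; apply/(pi0P hT); rewrite (linD plT) px py addr0.
have kpi a b : piT (t (rep piA (piA a)) (rep piB (piB b))) = piT (t a b).
  apply/(pi_eqP hT).
  have -> : t (rep piA (piA a)) (rep piB (piB b)) - t a b =
     t (rep piA (piA a) - a) (rep piB (piB b)) + t a (rep piB (piB b) - b).
    by rewrite (linB (tl _)) (linB (tr _)) addrA subrK.
  by apply: perpD; [apply: ZA; exact: rep_perp|apply: ZB; exact: rep_perp].
pose k x y := piT (t (rep piA x) (rep piB y)).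
have kb : bilin k.
  split => [y c x x'|x c y y']; rewrite /k -plT -?tl -?tr; apply/(pi_eqP hT).
    rewrite -(linB (tl _)); apply: ZA; apply/(pi_eqP hA).
    by rewrite plA !(rep_spec hA).
  rewrite -(linB (tr _)); apply: ZB; apply/(pi_eqP hB).
  by rewrite plB !(rep_spec hB).
have [K [[Kl Km] _]] := muni QT k kb.
have [[fAl [_ [fAn _]]] _] := objects_proof hsA hA.
have [[fBl [_ [fBn _]]] _] := objects_proof hsB hB.
have Hperp u : perp chi u -> H u = 0.
  move=> pu; have /asboolP [s es] := span_all mr hm (H u).
  rewrite es; apply: (reduce_sum fAl fAn ml mr) => x; apply: fBn => y.
  rewrite (lin_sum (lfun_lin (fBl _))).
  have -> : \sum_(p <- s) (gns_form psi piB (gns_form phi piA p.1 x *: p.2) y : C^o)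
           = \sum_(p <- s) (fV (m p.1 p.2) (m x y) : C^o).
    apply: eq_bigr => p _; rewrite fVm.
    by rewrite (linZ (lfun_lin (fBl _))).
  rewrite -(lin_sum (lfun_lin (fVl _))) -es.
  have -> : m x y = H (t (rep piA x) (rep piB y)) by rewrite Ht /g (rep_spec hA) (rep_spec hB).
  by rewrite S2 pu.
pose h q := H (rep piT q).
have hpi u : h (piT u) = H u.
  apply/eqP; rewrite -subr_eq0 -(linB Hl); apply/eqP; apply: Hperp; exact: rep_perp.
have hl : lin h.
  move=> c x y; have [u <-] := pi_surj hT x; have [v <-] := pi_surj hT y.
  by rewrite -plT !hpi Hl.
have chis : is_state chi.
  split => // w.
  have := @tensor_ext C A B T C^o t (fun w => (chi (sa_star w))^*) chi ht.
  move=> /(_ _ _ _ w) /(congr1 (@Num.conj_op C)); rewrite conjCK; apply.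
  - by move=> c x y /=; rewrite starLin chil rmorphD rmorphM /= conjCK.
  - exact: chil.
  by move=> a b; rewrite tstar !chit rmorphM /= !phi_star // !conjCK.
exists h.
split; first by split => // a b; rewrite hpi Ht.
split.
  split; first by split => //; split => //; split.
  split => //.
  split.
    move=> x y; have [u <-] := pi_surj hT x; have [v <-] := pi_surj hT y.
    by rewrite !hpi S2 (form_pi hT chis).
  move=> a x; have [u <-] := pi_surj hT x.
  rewrite (act_pi hT) !hpi /=.
  apply: (@tensor_ext C A B T V t (fun a => H (sa_mul a u)) (fun a => aV a (H u)) ht) => //.
  - exact: (lin_comp Hl (mul_linl u)).
  - by move=> c a1 a2; rewrite aVb.1.
  move=> a1 b1; move: u.
  apply: (@tensor_ext C A B T V t (fun u => H (sa_mul (t a1 b1) u)) (fun u => aV (t a1 b1) (H u)) ht) => //.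
  - exact: (lin_comp Hl (mul_linr _)).
  - exact: (lin_comp (aVb.2 _) Hl).
  move=> a2 b2; rewrite tmul !Ht /g aVm.
  by rewrite (act_pi hA) (act_pi hB).
exists K.
  move=> q; have [u <-] := pi_surj hT q; rewrite hpi.
  apply: (@tensor_ext C A B T QT t (fun u => K (H u)) piT ht) => //.
  - exact: (lin_comp Kl Hl).
  by move=> a b; rewrite Ht /g Km; exact: kpi.
move=> v; apply: (@tensor_ext C QA QB V V m (fun v => h (K v)) id hm) => //.
- exact: (lin_comp hl Kl).
by move=> x y; rewrite Km /k hpi Ht /g (rep_spec hA) (rep_spec hB).
Qed.
End TensorIso.

Theorem mainTheorem8 (R : realType) :
  GNS_objects R[i] /\ GNS_morphisms R[i] /\ GNS_functorial R[i] /\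
  GNS_tensor_iso R[i] /\ GNS_tensor_natural R[i] /\ GNS_unit R[i] /\
  GNS_assoc R[i] /\ GNS_unitors R[i] /\ GNS_symmetry R[i].
Proof.
split; first exact: objects_proof.
split; first exact: morphisms_proof.
split; first exact: functorial_proof.
split; first exact: tensor_iso_proof.
split; first exact: natural_proof.
split; first exact: unit_proof.
split; first exact: assoc_proof.
split; first exact: unitors_proof.
exact: symmetry_proof.
Qed.
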